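(* Let $m\in(0,1)$ and let $(\alpha_i)_{i\ge1}$ be a sequence in $(0,1)$. For $n\ge2$ put $\hat\alpha_n:=n\big(1-(\sum_{i=1}^n\frac1{n-\alpha_i})^{-1}\big)$ and suppose $\hat\alpha_\infty:=\lim_{n\to\infty}\hat\alpha_n$ exists and is positive. For $n\ge2$ and $1\le i\le n$ define the curved interior equilibrium quantities $$\bar x_n^*=1-\frac{nm}{n-1}\Big(\frac1{\hat\alpha_n}-1\Big),\quad x_{i,n}^*=\frac{(n-1)\alpha_i-n(1-\alpha_i)(m-\bar x_n^* )}{n-\alpha_i},\quad G_{i,n}^*=x_{i,n}^*+m-\bar x_n^*,\quad L_{i,n}^*=1-x_{i,n}^*.$$ Then, for each fixed $i$, as $n\to\infty$: $\bar x_n^*\to 1-m\big(\frac1{\hat\alpha_\infty}-1\big)$; $x_{i,n}^*\to \alpha_i-(1-\alpha_i)\big(\frac m{\hat\alpha_\infty}-1\big)$; $\frac{L^*_{i,n}}{1-\alpha_i}\to\frac m{\hat\alpha_\infty}$; and $\frac{G^*_{i,n}}{\alpha_i}\to\frac m{\hat\alpha_\infty}$.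
   Context: These quantities are the average effort, individual efforts, curved grades and leisure in a curved pure Nash equilibrium with all efforts positive of the $n$-student curved-exam game, in which student $i$ has ability $\alpha_i$, chooses effort $x_i\in[0,1]$, receives grade $x_i+\max(m-\bar x,0)$ with $\bar x$ the class mean effort, and has payoff $G_i^{\alpha_i}(1-x_i)^{1-\alpha_i}$. *)

(* Defs.v *)
From Stdlib Require Import Reals.
From Coquelicot Require Import Coquelicot.
Open Scope R_scope.

(* Abilities are indexed by i >= 1 : a 1, a 2, ... (a 0 is unused). *)

Definition alpha_hat (a : nat -> R) (n : nat) : R :=
  INR n * (1 - / sum_n_m (fun i => / (INR n - a i)) 1 n).

Definition xbar_star (a : nat -> R) (m : R) (n : nat) : R :=
  1 - INR n * m / (INR n - 1) * (/ alpha_hat a n - 1).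

Definition x_star (a : nat -> R) (m : R) (i n : nat) : R :=
  ((INR n - 1) * a i - INR n * (1 - a i) * (m - xbar_star a m n))
  / (INR n - a i).

Definition G_star (a : nat -> R) (m : R) (i n : nat) : R :=
  x_star a m i n + m - xbar_star a m n.

Definition L_star (a : nat -> R) (m : R) (i n : nat) : R :=
  1 - x_star a m i n.

(* Main.v *)
Require Import Defs.
From Stdlib Require Import Reals Lra Lia.
From Coquelicot Require Import Coquelicot.
Open Scope R_scope.

Lemma lim_invn : is_lim_seq (fun n => / INR n) 0.
Proof.
  pose proof (is_lim_seq_inv _ _ is_lim_seq_INR) as H.
  simpl in H. apply H. discriminate.
Qed.

Lemma lim_eq (u : nat -> R) (l l' : R) : is_lim_seq u l -> l = l' -> is_lim_seq u l'.
Proof. intros H E; subst; exact H. Qed.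

Lemma lim_ratio (b c : R) : b <= 1 ->
  is_lim_seq (fun n => (INR n - c) / (INR n - b)) 1.
Proof.
  intros Hb.
  apply is_lim_seq_ext_loc with (u := fun n => (1 - c * / INR n) * / (1 - b * / INR n)).
  - exists 2%nat. intros n Hn.
    assert (H2 : 2 <= INR n) by (replace 2 with (INR 2) by (simpl; lra); apply le_INR; lia).
    field. lra.
  - apply lim_eq with ((1 - c * 0) * / (1 - b * 0)); [|field].
    apply is_lim_seq_mult'.
    + apply is_lim_seq_minus'. apply is_lim_seq_const.
      apply is_lim_seq_mult'. apply is_lim_seq_const. apply lim_invn.
    + pose proof (is_lim_seq_inv (fun n => 1 - b * / INR n) (1 - b * 0)) as H.
      simpl in H. apply H.
      apply is_lim_seq_minus'. apply is_lim_seq_const.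
      apply is_lim_seq_mult'. apply is_lim_seq_const. apply lim_invn.
      intro E; injection E; lra.
Qed.

Theorem mainTheorem9 (m : R) (a : nat -> R) (ahinf : R)
  (Hm : 0 < m < 1)
  (Ha : forall i : nat, (1 <= i)%nat -> 0 < a i < 1)
  (Hlim : is_lim_seq (alpha_hat a) ahinf)
  (Hpos : 0 < ahinf) :
  is_lim_seq (xbar_star a m) (1 - m * (/ ahinf - 1)) /\
  (forall i : nat, (1 <= i)%nat ->
     is_lim_seq (fun n => x_star a m i n)
       (a i - (1 - a i) * (m / ahinf - 1)) /\
     is_lim_seq (fun n => L_star a m i n / (1 - a i)) (m / ahinf) /\
     is_lim_seq (fun n => G_star a m i n / a i) (m / ahinf)).
Proof.
  assert (Hinv : is_lim_seq (fun n => / alpha_hat a n) (/ ahinf)).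
  { pose proof (is_lim_seq_inv _ _ Hlim) as H. simpl in H. apply H.
    intro E; injection E; lra. }
  assert (Hx : is_lim_seq (xbar_star a m) (1 - m * (/ ahinf - 1))).
  { apply is_lim_seq_ext with
      (u := fun n => 1 - ((INR n - 0) / (INR n - 1)) * m * (/ alpha_hat a n - 1)).
    { intro n. unfold xbar_star. unfold Rdiv. ring. }
    replace (1 - m * (/ ahinf - 1)) with (1 - 1 * m * (/ ahinf - 1)) by ring.
    apply is_lim_seq_minus'. apply is_lim_seq_const.
    apply is_lim_seq_mult'. apply is_lim_seq_mult'.
    apply lim_ratio; lra. apply is_lim_seq_const.
    apply is_lim_seq_minus'. exact Hinv. apply is_lim_seq_const. }
  split; [exact Hx|].
  intros i Hi. specialize (Ha i Hi).
  assert (Hxi : is_lim_seq (fun n => x_star a m i n)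
       (a i - (1 - a i) * (m / ahinf - 1))).
  { apply is_lim_seq_ext with
      (u := fun n => ((INR n - 1) / (INR n - a i)) * a i
                     - ((INR n - 0) / (INR n - a i)) * (1 - a i) * (m - xbar_star a m n)).
    { intro n. unfold x_star. unfold Rdiv. ring. }
    replace (a i - (1 - a i) * (m / ahinf - 1)) with
      (1 * a i - 1 * (1 - a i) * (m - (1 - m * (/ ahinf - 1)))) by (field; lra).
    apply is_lim_seq_minus'.
    apply is_lim_seq_mult'. apply lim_ratio; lra. apply is_lim_seq_const.
    apply is_lim_seq_mult'. apply is_lim_seq_mult'. apply lim_ratio; lra.
    apply is_lim_seq_const.
    apply is_lim_seq_minus'. apply is_lim_seq_const. exact Hx. }
  split; [exact Hxi|]. split.
  - replace (m / ahinf) with ((1 - (a i - (1 - a i) * (m / ahinf - 1))) * / (1 - a i))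
      by (field; lra).
    apply is_lim_seq_mult'. apply is_lim_seq_minus'. apply is_lim_seq_const. exact Hxi.
    apply is_lim_seq_const.
  - replace (m / ahinf) with ((a i - (1 - a i) * (m / ahinf - 1) + m - (1 - m * (/ ahinf - 1))) * / a i)
      by (field; lra).
    apply is_lim_seq_mult'. apply is_lim_seq_minus'. apply is_lim_seq_plus'. exact Hxi.
    apply is_lim_seq_const. exact Hx. apply is_lim_seq_const.
Qed.
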